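(* If a series $\sum u_n$ of fuzzy numbers is $E_p$ summable to a fuzzy number $\nu$ and $\sqrt{n}\,D(u_n,\bar{0})=O(1)$, then $\sum u_n\in bs(F)$, i.e. the sequence of partial sums $s_n=\sum_{k=0}^n u_k$ is bounded.
   Context: $E^1$ denotes the space of fuzzy numbers (normal, fuzzy convex, upper semi-continuous fuzzy sets on $\mathbb{R}$ with compact support), with addition and scalar multiplication defined levelwise on $\alpha$-level sets $[u]_\alpha=[u^-_\alpha,u^+_\alpha]$, and metric $D(u,v)=\sup_{\alpha\in[0,1]}\max\{|u^-_\alpha-v^-_\alpha|,|u^+_\alpha-v^+_\alpha|\}$; $\bar{0}$ is the fuzzy number equal to $1$ at $0$ and $0$ elsewhere. For $p>0$, a sequence $(s_n)$ of fuzzy numbers has Euler means $t^p_n=\frac{1}{(p+1)^n}\sum_{k=0}^n\binom{n}{k}p^{n-k}s_k$, and is $E_p$ summable to $\nu$ if $D(t^p_n,\nu)\to 0$. A series $\sum u_n$ of fuzzy numbers is $E_p$ summable to $\nu$ if its sequence of partial sums $s_n=\sum_{k=0}^n u_k$ is $E_p$ summable to $\nu$. $bs(F)$ is the set of series of fuzzy numbers whose partial sums are bounded, i.e. there is $M>0$ with $D(s_n,\bar{0})<M$ for all $n$. *)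

(* Defs.v *)
From HB Require Import structures.
From mathcomp Require Import all_boot all_order all_algebra.
From mathcomp Require Import all_classical all_reals all_analysis.
Set Implicit Arguments. Unset Strict Implicit. Unset Printing Implicit Defensive.
Import Order.TTheory GRing.Theory Num.Theory.
Import numFieldNormedType.Exports.
Local Open Scope classical_set_scope.
Local Open Scope ring_scope.

Definition level {R : realType} (u : R -> R) (a : R) : set R :=
  if a == 0 then closure [set x | 0 < u x] else [set x | a <= u x].

(* E^1: normal, fuzzy convex, upper semicontinuous, compact support,
   values in [0,1]. *)
Definition is_fuzzy_number {R : realType} (u : R -> R) : Prop :=
  [/\ (forall x, 0 <= u x <= 1),
      (exists x, u x = 1),
      (forall x y l, 0 <= l <= 1 ->
          Num.min (u x) (u y) <= u (l * x + (1 - l) * y)),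
      (forall a, closed [set x | a <= u x]) &
      compact (closure [set x | 0 < u x])].

Definition lo {R : realType} (u : R -> R) (a : R) : R := inf (level u a).
Definition hi {R : realType} (u : R -> R) (a : R) : R := sup (level u a).

Definition fdist {R : realType} (u v : R -> R) : R :=
  sup [set d | exists2 a, 0 <= a <= 1 &
        d = Num.max `|lo u a - lo v a| `|hi u a - hi v a|].

Definition msum {R : realType} (A B : set R) : set R :=
  [set x | exists a b, [/\ A a, B b & x = a + b]].
Definition mscale {R : realType} (c : R) (A : set R) : set R :=
  [set x | exists2 a, A a & x = c * a].

(* levelwise operations: the fuzzy set whose a-level sets (0 < a <= 1) are
   [u]_a + [v]_a (resp. c [u]_a); membership value = sup of such a (0 if none). *)
Definition fadd {R : realType} (u v : R -> R) : R -> R :=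
  fun x => sup [set a | 0 < a <= 1 /\ msum (level u a) (level v a) x].
Definition fscale {R : realType} (c : R) (u : R -> R) : R -> R :=
  fun x => sup [set a | 0 < a <= 1 /\ mscale c (level u a) x].

Definition fzero {R : realType} : R -> R := fun x => if x == 0 then 1 else 0.

Definition psum {R : realType} (u : nat -> R -> R) (n : nat) : R -> R :=
  \big[fadd/fzero]_(k < n.+1) u k.

Definition euler_mean {R : realType} (p : R) (s : nat -> R -> R) (n : nat)
  : R -> R :=
  \big[fadd/fzero]_(k < n.+1)
     fscale ('C(n, k)%:R * p ^+ (n - k) / (p + 1) ^+ n) (s k).

Definition Ep_summable_seq {R : realType} (p : R) (s : nat -> R -> R)
  (nu : R -> R) : Prop :=
  fdist (euler_mean p s n) nu @[n --> \oo] --> 0.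

Definition Ep_summable_series {R : realType} (p : R) (u : nat -> R -> R)
  (nu : R -> R) : Prop := Ep_summable_seq p (psum u) nu.

Definition in_bs {R : realType} (u : nat -> R -> R) : Prop :=
  exists2 M : R, 0 < M & forall n, fdist (psum u n) fzero < M.

(* Main.v *)
Require Import Defs.
From HB Require Import structures.
From mathcomp Require Import all_boot all_order all_algebra.
From mathcomp Require Import all_classical all_reals all_analysis.
From mathcomp Require Import lra ring.
Import Order.TTheory GRing.Theory Num.Theory.
Import numFieldNormedType.Exports.
Local Open Scope classical_set_scope.
Local Open Scope ring_scope.

Section S.
Variable R : realType.
Implicit Types (L U : R -> R) (S : set R) (w : R -> R).

Lemma itv_infsup S (l u : R) : l <= u -> (forall x, S x <-> l <= x <= u) ->
  inf S = l /\ sup S = u.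
Proof.
move=> LU HS.
have -> : S = `[l, u]%classic.
  apply/seteqP; split=> x /=; rewrite in_itv /=; by move/HS.
by rewrite inf_itvcc // sup_itvcc.
Qed.

Lemma sup_gt S b : 0 <= b -> has_ubound S -> b < sup S -> exists2 c, S c & b < c.
Proof.
move=> b0 uS bS; case: (pselect (S !=set0)) => [S0|nS0]; last first.
  have S0 : S = set0 by apply/seteqP; split=> y Sy //; apply: nS0; exists y.
  by move: bS; rewrite S0 sup0 => b0'; lra.
have : 0 < sup S - b by rewrite subr_gt0.
move=> /sup_adherent /(_ (conj S0 uS)) [c Sc hc]; exists c => //; lra.
Qed.

Definition FN w :=
 [/\ forall a, 0 < a <= 1 -> forall x, a <= w x <-> lo w a <= x <= hi w a,
     forall a, 0 < a <= 1 -> lo w a <= hi w a,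
     forall a, 0 < a <= 1 -> forall e, 0 < e -> exists b,
        [/\ 0 < b, b < a, lo w a - e < lo w b & hi w b < hi w a + e] &
     exists B, forall a, 0 < a <= 1 -> `|lo w a| <= B /\ `|hi w a| <= B].

Lemma FN_mono12 w a b :
  (forall a, 0 < a <= 1 -> forall x, a <= w x <-> lo w a <= x <= hi w a) ->
  (forall a, 0 < a <= 1 -> lo w a <= hi w a) ->
  0 < a -> a <= b -> b <= 1 ->
  lo w a <= lo w b /\ hi w b <= hi w a.
Proof.
move=> H1 H2 a0 ab b1.
have a1 : 0 < a <= 1 by apply/andP; split => //; apply: le_trans ab b1.
have b01 : 0 < b <= 1 by apply/andP; split => //; apply: lt_le_trans ab.
have lb := H2 b b01.
have /(H1 b b01) hb1 : lo w b <= lo w b <= hi w b by rewrite lexx lb.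
have /(H1 b b01) hb2 : lo w b <= hi w b <= hi w b by rewrite lexx lb.
have /(H1 a a1) /andP[h1 _] : a <= w (lo w b) by apply: le_trans hb1.
have /(H1 a a1) /andP[_ h2] : a <= w (hi w b) by apply: le_trans hb2.
by [].
Qed.

Lemma FN_mono w a b : FN w -> 0 < a -> a <= b -> b <= 1 ->
  lo w a <= lo w b /\ hi w b <= hi w a.
Proof. by case=> H1 H2 _ _; apply: (@FN_mono12 w a b H1 H2). Qed.

Arguments FN_mono {w a b}.

Lemma mkFN L U w :
  (forall a, 0 < a <= 1 -> L a <= U a) ->
  (forall a b, 0 < a -> a <= b -> b <= 1 -> L a <= L b /\ U b <= U a) ->
  (forall a, 0 < a <= 1 -> forall e, 0 < e -> exists b,
        [/\ 0 < b, b < a, L a - e < L b & U b < U a + e]) ->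
  (exists B, forall a, 0 < a <= 1 -> `|L a| <= B /\ `|U a| <= B) ->
  (forall x, w x = sup [set b | (0 < b <= 1) /\ L b <= x <= U b]) ->
  FN w /\ forall a, 0 < a <= 1 -> lo w a = L a /\ hi w a = U a.
Proof.
move=> LU mono H3 [B HB] Hw.
have key : forall a, 0 < a <= 1 -> forall x, a <= w x <-> L a <= x <= U a.
  move=> a a01 x; pose S := [set b | (0 < b <= 1) /\ L b <= x <= U b].
  have uS : has_ubound S by exists 1 => y [/andP[]].
  rewrite Hw; split => [aS|xa]; last first.
    by apply: ub_le_sup => //; split.
  case/andP: (a01) => a0 a1.
  apply/andP; split; rewrite leNgt; apply/negP => xa.
  - have e0 : 0 < L a - x by rewrite subr_gt0.
    have [b [b0 ba hb _]] := H3 a a01 _ e0.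
    have [c [/andP [c0 c1] /andP[c2 c3]] bc] := sup_gt _ _ (ltW b0) uS (lt_le_trans ba aS).
    have [m1 _] := mono b c b0 (ltW bc) c1.
    lra.
  - have e0 : 0 < x - U a by rewrite subr_gt0.
    have [b [b0 ba _ hb]] := H3 a a01 _ e0.
    have [c [/andP [c0 c1] /andP[c2 c3]] bc] := sup_gt _ _ (ltW b0) uS (lt_le_trans ba aS).
    have [_ m1] := mono b c b0 (ltW bc) c1.
    lra.
have lohi : forall a, 0 < a <= 1 -> lo w a = L a /\ hi w a = U a.
  move=> a a01; rewrite /lo /hi /level.
  have -> : (a == 0) = false by apply/negbTE; case/andP: a01 => a0 _; rewrite gt_eqF.
  exact: itv_infsup (LU a a01) (key a a01).
split => //; split.
- by move=> a a01 x; have [-> ->] := lohi a a01; exact: key.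
- by move=> a a01; have [-> ->] := lohi a a01; exact: LU.
- move=> a a01 e e0; have [b [b0 ba h1 h2]] := H3 a a01 e e0.
  have b01 : 0 < b <= 1 by rewrite b0 /=; case/andP: a01 => _; apply: le_trans (ltW ba).
  exists b; have [-> ->] := lohi a a01; have [-> ->] := lohi b b01; by split.
- by exists B => a a01; have [-> ->] := lohi a a01; exact: HB.
Qed.

Lemma level_pos w a : 0 < a -> level w a = [set x | a <= w x].
Proof. by move=> a0; rewrite /level gt_eqF. Qed.

Lemma FN_fadd u v : FN u -> FN v ->
  FN (fadd u v) /\ forall a, 0 < a <= 1 ->
    lo (fadd u v) a = lo u a + lo v a /\ hi (fadd u v) a = hi u a + hi v a.
Proof.
move=> Fu Fv; have [u1 u2 u3 [Bu HBu]] := Fu; have [v1 v2 v3 [Bv HBv]] := Fv.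
apply: mkFN.
- by move=> a a01; have := u2 a a01; have := v2 a a01; lra.
- move=> a b a0 ab b1; have [h1 h2] := FN_mono Fu a0 ab b1.
  have [h3 h4] := FN_mono Fv a0 ab b1; lra.
- move=> a a01 e e0; have e2 : 0 < e / 2 by rewrite divr_gt0.
  have [b1 [b10 b1a l1 h1]] := u3 a a01 _ e2.
  have [b2 [b20 b2a l2 h2]] := v3 a a01 _ e2.
  case/andP: (a01) => a0 a1.
  have [b12|b21] := leP b1 b2.
  + have [m1 m2] := FN_mono Fu b10 b12 (le_trans (ltW b2a) a1).
    exists b2; split => //; lra.
  + have [m1 m2] := FN_mono Fv b20 (ltW b21) (le_trans (ltW b1a) a1).
    exists b1; split => //; lra.
- exists (Bu + Bv) => a a01; have [h1 h2] := HBu a a01; have [h3 h4] := HBv a a01.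
  split; rewrite (le_trans (ler_normD _ _)) //; lra.
- move=> x; rewrite /fadd; congr sup; apply/seteqP; split => b /= [b01 H]; split => //.
  + case/andP: (b01) => b0 _; move: H; rewrite /msum !level_pos //.
    move=> [y [z [/(u1 b b01) /andP[hy1 hy2] /(v1 b b01) /andP[hz1 hz2] ->]]].
    apply/andP; split; lra.
  + case/andP: (b01) => b0 _; rewrite /msum !level_pos //.
    have := u2 b b01; have := v2 b b01; case/andP: H => H1 H2 lv lu.
    have [c|c] := leP (lo u b) (x - hi v b).
    * exists (x - hi v b), (hi v b); split; last by rewrite subrK.
      - by apply/(u1 b b01); apply/andP; split; lra.
      - by apply/(v1 b b01); apply/andP; split; lra.
    * exists (lo u b), (x - lo u b); split; last by rewrite addrC subrK.
      - by apply/(u1 b b01); apply/andP; split; lra.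
      - by apply/(v1 b b01); apply/andP; split; lra.
Qed.

Lemma FN_fscale c u : 0 < c -> FN u ->
  FN (fscale c u) /\ forall a, 0 < a <= 1 ->
    lo (fscale c u) a = c * lo u a /\ hi (fscale c u) a = c * hi u a.
Proof.
move=> c0 Fu; have [u1 u2 u3 [Bu HBu]] := Fu.
apply: mkFN.
- by move=> a a01; have := u2 a a01; rewrite ler_pM2l.
- move=> a b a0 ab b1; have [h1 h2] := FN_mono Fu a0 ab b1.
  by rewrite !ler_pM2l.
- move=> a a01 e e0; have e2 : 0 < e / c by rewrite divr_gt0.
  have [b [b0 ba l1 h1]] := u3 a a01 _ e2.
  exists b; split => //.
  + have : c * (lo u a - e / c) < c * lo u b by rewrite ltr_pM2l.
    by rewrite mulrBr mulrCA divff ?mulr1 // gt_eqF.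
  + have : c * hi u b < c * (hi u a + e / c) by rewrite ltr_pM2l.
    by rewrite mulrDr mulrCA divff ?mulr1 // gt_eqF.
- exists (c * Bu) => a a01; have [h1 h2] := HBu a a01.
  by rewrite !normrM (gtr0_norm c0) !ler_pM2l.
- move=> x; rewrite /fscale; congr sup; apply/seteqP; split => b /= [b01 H]; split => //.
  + case/andP: (b01) => b0 _; move: H; rewrite /mscale !level_pos //.
    move=> [y /(u1 b b01) /andP[hy1 hy2] ->].
    by rewrite !ler_pM2l // hy1 hy2.
  + case/andP: (b01) => b0 _; rewrite /mscale !level_pos //.
    exists (x / c); last by rewrite mulrCA divff ?mulr1 // gt_eqF.
    apply/(u1 b b01); case/andP: H => H1 H2.
    by rewrite ler_pdivlMr // ler_pdivrMr // ![_ * c]mulrC H1 H2.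
Qed.

Lemma fzero_lohi (a : R) : 0 < a <= 1 -> lo (@fzero R) a = 0 /\ hi (@fzero R) a = 0.
Proof.
move=> /andP[a0 a1]; rewrite /lo /hi level_pos //.
apply: itv_infsup => // x; rewrite /fzero /=.
case: eqP => [->|/eqP x0]; first by rewrite lexx a1.
split; first by move=> h; lra.
by move=> h; exfalso; move: x0; rewrite eq_le; case/andP: h => -> ->.
Qed.

Lemma FN_fzero : FN (@fzero R).
Proof.
split.
- move=> a a01 x; have [-> ->] := fzero_lohi _ a01; case/andP: a01 => a0 a1.
  rewrite /fzero; case: eqP => [->|/eqP x0]; first by rewrite lexx a1.
  split; first by move=> h; lra.
  by move=> h; exfalso; move: x0; rewrite eq_le; case/andP: h => -> ->.
- by move=> a a01; have [-> ->] := fzero_lohi _ a01.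
- move=> a a01 e e0; case/andP: (a01) => a0 a1.
  have b01 : 0 < a / 2 <= 1 by apply/andP; split; lra.
  exists (a / 2); have [-> ->] := fzero_lohi _ a01; have [-> ->] := fzero_lohi _ b01.
  split; lra.
- by exists 0 => a a01; have [-> ->] := fzero_lohi _ a01; rewrite normr0.
Qed.

Lemma closed_inf_in S : closed S -> S !=set0 -> has_lbound S -> S (inf S).
Proof.
move=> cS S0 lS; apply: cS; rewrite /closure => B /nbhs_ballP [e e0 eB].
have [y Sy ye] := inf_adherent e0 (conj S0 lS).
exists y; split => //; apply: eB; rewrite /ball /= distrC ger0_norm.
  by rewrite ltrBlDl; lra.
by have := ge_inf lS Sy; rewrite /= subr_ge0.
Qed.

Lemma closed_sup_in S : closed S -> S !=set0 -> has_ubound S -> S (sup S).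
Proof. by move=> cS S0 uS; apply: cS; apply: closure_sup. Qed.

Lemma FN_of_fuzzy u : is_fuzzy_number u -> FN u.
Proof.
case=> u01 [x1 ux1] conv ucl cK.
have [B HB] : exists B, forall x, 0 < u x -> `|x| <= B.
  have := compact_bounded cK; rewrite /bounded_near => -[M [_ HM]].
  exists (M + 1) => x ux; apply: (HM (M + 1)); first by lra.
  exact: subset_closure.
have H1 : forall a, 0 < a <= 1 -> forall x, a <= u x <-> lo u a <= x <= hi u a.
  move=> a /andP[a0 a1] x; rewrite /lo /hi level_pos //.
  set A := [set y | a <= u y].
  have A0 : A !=set0 by exists x1; rewrite /A /= ux1.
  have AB : forall y, A y -> `|y| <= B by move=> y Ay; apply: HB; exact: lt_le_trans a0 Ay.
  have lA : has_lbound A by exists (- B) => y /AB; rewrite ler_norml => /andP[].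
  have uA : has_ubound A by exists B => y /AB; rewrite ler_norml => /andP[].
  have Ai := closed_inf_in _ (ucl a) A0 lA.
  have As := closed_sup_in _ (ucl a) A0 uA.
  split => [Ax|/andP[h1 h2]].
    by apply/andP; split; [apply: ge_inf | apply: ub_le_sup].
  have [e|ne] := eqVneq (inf A) (sup A).
    have -> : x = inf A by apply/eqP; rewrite eq_le h1 e h2.
    exact: Ai.
  have d0 : 0 < sup A - inf A.
    by rewrite subr_gt0 lt_neqAle ne (le_trans h1 h2).
  pose l := (sup A - x) / (sup A - inf A).
  have l01 : 0 <= l <= 1.
    apply/andP; split; first by apply: divr_ge0; lra.
    by rewrite /l ler_pdivrMr // mul1r; lra.
  have -> : x = l * inf A + (1 - l) * sup A.
    rewrite /l; field; by rewrite gt_eqF.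
  apply: le_trans (conv _ _ _ l01); rewrite le_min; apply/andP; split; [exact: Ai|exact: As].
have H2 : forall a, 0 < a <= 1 -> lo u a <= hi u a.
  move=> a a01; case/andP: (a01) => _ a1.
  have /(H1 a a01 x1) /andP[h h'] : a <= u x1 by rewrite ux1.
  exact: le_trans h h'.
have mono a b := @FN_mono12 u a b H1 H2.
split => //.
- move=> a a01 e e0; case/andP: (a01) => a0 a1.
  have Hz : forall z, (forall b, 0 < b -> b < a -> b <= u z) -> a <= u z.
    move=> z hz; rewrite leNgt; apply/negP => za.
    have /andP[uz0 _] := u01 z.
    have : (u z + a) / 2 <= u z by apply: hz; lra.
    lra.
  have [b1 [b10 b1a hb1]] : exists b, [/\ 0 < b, b < a & lo u a - e < lo u b].
    apply: contrapT => nb.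
    have hb : forall b, 0 < b -> b < a -> lo u b <= lo u a - e.
      move=> b b0 ba; rewrite leNgt; apply/negP => h; apply: nb; exists b; by split.
    have : a <= u (lo u a - e).
      apply: Hz => b b0 ba.
      have b01 : 0 < b <= 1 by apply/andP; split => //; lra.
      apply/(H1 b b01); rewrite hb //=.
      have [_ m2] := mono b a b0 (ltW ba) a1.
      have := H2 a a01; lra.
    move=> /(H1 a a01) /andP[h _]; lra.
  have [b2 [b20 b2a hb2]] : exists b, [/\ 0 < b, b < a & hi u b < hi u a + e].
    apply: contrapT => nb.
    have hb : forall b, 0 < b -> b < a -> hi u a + e <= hi u b.
      move=> b b0 ba; rewrite leNgt; apply/negP => h; apply: nb; exists b; by split.
    have : a <= u (hi u a + e).
      apply: Hz => b b0 ba.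
      have b01 : 0 < b <= 1 by apply/andP; split => //; lra.
      apply/(H1 b b01); rewrite hb // andbT.
      have [m1 _] := mono b a b0 (ltW ba) a1.
      have := H2 a a01; lra.
    move=> /(H1 a a01) /andP[_ h]; lra.
  have [b12|b21] := leP b1 b2.
  + have [m1 m2] := mono b1 b2 b10 b12 (le_trans (ltW b2a) a1).
    exists b2; split => //; lra.
  + have [m1 m2] := mono b2 b1 b20 (ltW b21) (le_trans (ltW b1a) a1).
    exists b1; split => //; lra.
- exists B => a a01; case/andP: (a01) => a0 a1; have l := H2 a a01; split; apply: HB.
  + have /(H1 a a01) h : lo u a <= lo u a <= hi u a by rewrite lexx l.
    exact: lt_le_trans a0 h.
  + have /(H1 a a01) h : lo u a <= hi u a <= hi u a by rewrite lexx l.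
    exact: lt_le_trans a0 h.
Qed.

Lemma lo0_bound w C : FN w -> (forall a, 0 < a <= 1 -> `|lo w a| <= C /\ `|hi w a| <= C) ->
  `|lo w 0| <= C /\ `|hi w 0| <= C.
Proof.
move=> [H1 H2 _ _] HC.
have o1 : 0 < (1:R) <= 1 by rewrite ltr01 lexx.
pose A := [set x | 0 < w x].
pose S := [set x : R | - C <= x] `&` [set x | x <= C].
have cS : closed S by apply: closedI; [apply: closed_ge | apply: closed_le].
have AS : A `<=` S.
  move=> x; rewrite /A /S /= => wx.
  have [b [b01 bw]] : exists b, 0 < b <= 1 /\ b <= w x.
    have [h|h] := leP (w x) 1.
      by exists (w x); rewrite wx h lexx.
    by exists 1; split => //; apply: ltW.
  have /andP[h1 h2] := (H1 b b01 x).1 bw.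
  have [/ler_normlP [h3 h4] /ler_normlP [h5 h6]] := HC b b01.
  split; lra.
have cAS : closure A `<=` S by rewrite (closure_id S).1 //; apply: closureS.
have l1 := H2 1 o1.
have x0A : closure A (lo w 1).
  apply: subset_closure; rewrite /A /=.
  have : 1 <= w (lo w 1) by apply/(H1 1 o1); rewrite lexx l1.
  lra.
have A0 : closure A !=set0 by exists (lo w 1).
have lA : has_lbound (closure A) by exists (- C) => y /cAS [].
have uA : has_ubound (closure A) by exists C => y /cAS [].
have [s1 s2] := cAS _ x0A.
have f1 := lb_le_inf A0 (fun y (h : closure A y) => (cAS y h).1).
have f2 := ge_inf lA x0A.
have f3 := ub_le_sup uA x0A.
have f4 := ge_sup A0 (fun y (h : closure A y) => (cAS y h).2).
rewrite /lo /hi /level eqxx -/A; split; apply/ler_normlP; split; lra.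
Qed.

Definition Bnd w C := forall a, 0 <= a <= 1 -> `|lo w a| <= C /\ `|hi w a| <= C.

Lemma Bnd_of w C : FN w -> (forall a, 0 < a <= 1 -> `|lo w a| <= C /\ `|hi w a| <= C) ->
  Bnd w C.
Proof.
move=> Fw HC a /andP[a0 a1]; have [->|a0'] := eqVneq a 0; first exact: lo0_bound.
by apply: HC; rewrite lt_neqAle eq_sym a0' a0 a1.
Qed.

Lemma FN_Bnd w : FN w -> exists C, Bnd w C.
Proof. by move=> Fw; have [_ _ _ [B HB]] := Fw; exists B; exact: Bnd_of. Qed.

Lemma fdist_le w z C : (forall a, 0 <= a <= 1 ->
  `|lo w a - lo z a| <= C /\ `|hi w a - hi z a| <= C) -> fdist w z <= C.
Proof.
move=> H; apply: ge_sup.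
  by exists (Num.max `|lo w 0 - lo z 0| `|hi w 0 - hi z 0|), 0 => //; rewrite lexx ler01.
move=> d [a a01 ->]; have [h1 h2] := H a a01.
by rewrite ge_max h1 h2.
Qed.

Lemma fdist_ge w z a : FN w -> FN z -> 0 <= a <= 1 ->
  `|lo w a - lo z a| <= fdist w z /\ `|hi w a - hi z a| <= fdist w z.
Proof.
move=> Fw Fz a01; have [Cw HCw] := @FN_Bnd w Fw; have [Cz HCz] := @FN_Bnd z Fz.
have ub : has_ubound [set d | exists2 a, 0 <= a <= 1 &
        d = Num.max `|lo w a - lo z a| `|hi w a - hi z a|].
  exists (Cw + Cz) => d [b b01 ->]; have [h1 h2] := HCw b b01; have [h3 h4] := HCz b b01.
  rewrite ge_max; apply/andP; split; rewrite (le_trans (ler_normB _ _)) //; lra.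
have := ub_le_sup ub (ex_intro2 _ _ a a01 erefl).
rewrite ge_max => /andP[h1 h2]; split; [exact: le_trans h1 | exact: le_trans h2].
Qed.
End S.

Arguments FN {R}.
Arguments Bnd {R}.
Arguments FN_fadd {R u v}.
Arguments FN_fscale {R c u}.
Arguments FN_fzero {R}.
Arguments fzero_lohi {R a}.
Arguments FN_of_fuzzy {R u}.
Arguments Bnd_of {R w C}.
Arguments FN_Bnd {R w}.
Arguments fdist_le {R w z C}.
Arguments fdist_ge {R w z a}.
Arguments lo0_bound {R w C}.

Section B.
Variable R : realType.
Variable p : R.

Lemma mom0 n : \sum_(k < n.+1) 'C(n, k)%:R * p ^+ (n - k) = (p + 1) ^+ n.
Proof.
rewrite exprDn; apply: eq_bigr => k _.
by rewrite expr1n mulr1 mulr_natl.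
Qed.

Lemma shift_mom n (f : nat -> R) :
  \sum_(k < n.+2) (k%:R * f k) * ('C(n.+1, k)%:R * p ^+ (n.+1 - k)) =
  n.+1%:R * \sum_(j < n.+1) f j.+1 * ('C(n, j)%:R * p ^+ (n - j)).
Proof.
rewrite big_ord_recl /= mul0r mul0r add0r mulr_sumr; apply: eq_bigr => j _.
rewrite /bump /= add1n subSS.
have e : (j.+1 * 'C(n.+1, j.+1))%N = (n.+1 * 'C(n, j))%N by rewrite -mul_bin_diag.
have : (j.+1%:R * 'C(n.+1, j.+1)%:R : R) = n.+1%:R * 'C(n, j)%:R by rewrite -!natrM e.
move=> h; transitivity ((j.+1%:R * 'C(n.+1, j.+1)%:R) * (f j.+1 * p ^+ (n - j))); first ring.
rewrite h; ring.
Qed.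

Lemma mom1 n : \sum_(k < n.+1) k%:R * ('C(n, k)%:R * p ^+ (n - k)) =
  n%:R * (p + 1) ^+ n.-1.
Proof.
case: n => [|n]; first by rewrite big_ord1 /= !mul0r.
have := shift_mom n (fun _ => 1); under eq_bigr do rewrite mulr1.
move=> ->; under eq_bigr do rewrite mul1r; by rewrite mom0.
Qed.

Lemma mom2 n : \sum_(k < n.+1) (k%:R * (k%:R - 1)) * ('C(n, k)%:R * p ^+ (n - k)) =
  n%:R * (n%:R - 1) * (p + 1) ^+ n.-2.
Proof.
case: n => [|n]; first by rewrite big_ord1 /= !mul0r.
rewrite (shift_mom n (fun k => k%:R - 1)).
under eq_bigr do rewrite -addn1 natrD addrK.
by rewrite mom1 -addn1 natrD addrK mulrA addn1.
Qed.

Definition cw n k := 'C(n, k)%:R * p ^+ (n - k) / (p + 1) ^+ n.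

Hypothesis p0 : 0 < p.

Lemma p1n0 n : (p + 1) ^+ n != 0.
Proof. by rewrite expf_neq0 // gt_eqF // ltr_wpDl // ltW. Qed.

Lemma cw_ge0 n k : 0 <= cw n k.
Proof.
by rewrite /cw divr_ge0 ?exprn_ge0 ?mulr_ge0 ?exprn_ge0 ?ler0n // ?addr_ge0 // ltW.
Qed.

Lemma cw_sum n : \sum_(k < n.+1) cw n k = 1.
Proof. by rewrite /cw -mulr_suml mom0 divff // p1n0. Qed.

Lemma cw_var n (m : R) :
  \sum_(k < n.+1) cw n k * (k%:R - m) ^+ 2 =
  n%:R * (n%:R - 1) / (p + 1) ^+ 2 + n%:R / (p + 1) - 2 * m * n%:R / (p + 1) + m ^+ 2.
Proof.
have e : forall k : 'I_n.+1, cw n k * (k%:R - m) ^+ 2 =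
   ((k%:R * (k%:R - 1)) * ('C(n, k)%:R * p ^+ (n - k))
   + (1 - 2 * m) * (k%:R * ('C(n, k)%:R * p ^+ (n - k)))
   + m ^+ 2 * ('C(n, k)%:R * p ^+ (n - k))) / (p + 1) ^+ n.
  move=> k; rewrite /cw; field; exact: p1n0.
rewrite (eq_bigr _ (fun k _ => e k)) -mulr_suml !big_split /= -!mulr_sumr.
rewrite mom0 mom1 mom2; clear e.
have q0 : p + 1 != 0 by rewrite gt_eqF // ltr_wpDl // ltW.
case: n => [|[|n]] /=; rewrite ?expr0 ?expr1 ?exprS; field; rewrite ?mulf_neq0 ?p1n0 ?q0 //.
Qed.

Definition S (x : nat -> R) l := \sum_(i < l.+1) x i.

Lemma step_bound (M y : R) (l : nat) : 0 <= M ->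
  Num.sqrt (l.+1%:R) * `|y| <= M ->
  `|y| <= 2 * M * (Num.sqrt (l.+1%:R) - Num.sqrt (l%:R)).
Proof.
move=> M0 h.
set s := Num.sqrt _; set t := Num.sqrt _.
have s2 : s ^+ 2 = l.+1%:R by rewrite sqr_sqrtr // ler0n.
have t2 : t ^+ 2 = l%:R by rewrite sqr_sqrtr // ler0n.
have st : s ^+ 2 = t ^+ 2 + 1 by rewrite s2 t2 -natr1.
have s0 : 0 < s by rewrite sqrtr_gt0 ltr0n.
have t0 : 0 <= t by rewrite sqrtr_ge0.
have k : 1 <= 2 * s * (s - t).
  have -> : 2 * s * (s - t) = (s - t) ^+ 2 + (s ^+ 2 - t ^+ 2) by ring.
  rewrite st; have := sqr_ge0 (s - t); lra.
rewrite -(ler_pM2l s0); apply: le_trans h _.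
have := ler_wpM2l M0 k; rewrite mulr1 => h2.
have -> : s * (2 * M * (s - t)) = M * (2 * s * (s - t)) by ring.
exact: h2.
Qed.

Lemma diff_bound (x : nat -> R) (M : R) : 0 <= M ->
  (forall k, (1 <= k)%N -> Num.sqrt (k%:R) * `|x k| <= M) ->
  forall j t, `|S x (j + t) - S x j| <= 2 * M * (Num.sqrt ((j + t)%:R) - Num.sqrt (j%:R)).
Proof.
move=> M0 hx j; elim => [|t IH]; first by rewrite addn0 !subrr normr0 mulr0.
rewrite addnS /S big_ord_recr /= -/(S x (j + t)).
have := step_bound M (x (j + t).+1) (j + t) M0 (hx (j + t).+1 isT).
move=> h; rewrite -addrA (addrC (x _)) addrA.
apply: le_trans (ler_normD _ _) _; lra.
Qed.

Lemma pt_bound (s t : R) : 0 <= s -> 0 < t ->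
  2 * `|s - t| <= 1 + (s ^+ 2 - t ^+ 2) ^+ 2 / t ^+ 2.
Proof.
move=> s0 t0.
have h : (s - t) ^+ 2 <= (s ^+ 2 - t ^+ 2) ^+ 2 / t ^+ 2.
  rewrite ler_pdivlMr ?exprn_gt0 //.
  have -> : (s ^+ 2 - t ^+ 2) ^+ 2 = (s - t) ^+ 2 * (s + t) ^+ 2 by ring.
  apply: ler_wpM2l; first exact: sqr_ge0.
  rewrite -subr_ge0; have -> : (s + t) ^+ 2 - t ^+ 2 = s * (s + 2 * t) by ring.
  apply: mulr_ge0 => //; lra.
have e1 : (s - t + 1) ^+ 2 = (s - t) ^+ 2 + 2 * (s - t) + 1 by ring.
have e2 : (s - t - 1) ^+ 2 = (s - t) ^+ 2 - 2 * (s - t) + 1 by ring.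
have f1 := sqr_ge0 (s - t + 1); have f2 := sqr_ge0 (s - t - 1).
have [st|st] := leP s t.
- rewrite ler0_norm ?subr_le0 //; lra.
- rewrite gtr0_norm ?subr_gt0 //; lra.
Qed.

Lemma absS (x : nat -> R) (M : R) : 0 <= M ->
  (forall k, (1 <= k)%N -> Num.sqrt (k%:R) * `|x k| <= M) ->
  forall m k : nat, (1 <= m)%N ->
  `|S x m - S x k| <= M * (1 + (k%:R - m%:R) ^+ 2 / m%:R).
Proof.
move=> M0 hx m k m1.
have m0 : (0 : R) < m%:R by rewrite ltr0n.
have sm : 0 < Num.sqrt (m%:R : R) by rewrite sqrtr_gt0.
have hp := pt_bound _ _ (sqrtr_ge0 (k%:R : R)) sm.
rewrite !sqr_sqrtr ?ler0n // in hp.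
have hd : `|S x m - S x k| <= 2 * M * `|Num.sqrt (k%:R) - Num.sqrt (m%:R)|.
  have [km|mk] := leqP k m.
  - have := diff_bound _ _ M0 hx k (m - k); rewrite subnKC // => h.
    have hs : 0 <= Num.sqrt (m%:R : R) - Num.sqrt k%:R.
      by rewrite subr_ge0 ler_sqrt ?ler0n // ler_nat.
    by rewrite (distrC (Num.sqrt k%:R)) (ger0_norm hs).
  - have := diff_bound _ _ M0 hx m (k - m); rewrite subnKC ?(ltnW mk) // => h.
    have hs : 0 <= Num.sqrt (k%:R : R) - Num.sqrt m%:R.
      by rewrite subr_ge0 ler_sqrt ?ler0n // ler_nat ltnW.
    by rewrite distrC (ger0_norm hs).
apply: le_trans hd _.
have := ler_wpM2l M0 hp; rewrite mulrA (mulrC M) => h; exact: h.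
Qed.

Lemma taub (x : nat -> R) (M K : R) (N0 : nat) : 0 <= M ->
  (forall k, (1 <= k)%N -> Num.sqrt (k%:R) * `|x k| <= M) ->
  (forall n, (N0 <= n)%N -> `|\sum_(k < n.+1) cw n k * S x k| <= K) ->
  forall m, (N0 <= m)%N -> (1 <= m)%N -> `|S x m| <= K + 3 * M.
Proof.
move=> M0 hx hT m Nm m1.
have q0 : 0 < p + 1 by apply: addr_gt0.
have mr0 : (0 : R) < m%:R by rewrite ltr0n.
have mq : 0 <= m%:R * (p + 1) by apply: mulr_ge0; lra.
set n := Num.truncn (m%:R * (p + 1)).
have /andP[tn1 tn2] := truncn_itv mq; rewrite -/n in tn1 tn2.
have mn : (m <= n)%N by rewrite truncn_ge_nat // mulrDr mulr1 lerDr mulr_ge0 // ltW.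
have hTn := hT n (leq_trans Nm mn).
suff key : `|S x m - \sum_(k < n.+1) cw n k * S x k| <= 3 * M.
  have := ler_normD (S x m - \sum_(k < n.+1) cw n k * S x k) (\sum_(k < n.+1) cw n k * S x k).
  rewrite subrK; lra.
have -> : S x m = \sum_(k < n.+1) cw n k * S x m by rewrite -mulr_suml cw_sum mul1r.
rewrite -sumrB.
apply: le_trans (ler_norm_sum _ _ _) _.
apply: (@le_trans _ _ (\sum_(k < n.+1) cw n k * (M * (1 + (k%:R - m%:R) ^+ 2 / m%:R)))).
  apply: ler_sum => k _; rewrite -mulrBr normrM ger0_norm ?cw_ge0 //.
  by apply: ler_wpM2l; [exact: cw_ge0 | exact: absS].
have e : forall k : 'I_n.+1, cw n k * (M * (1 + (k%:R - m%:R) ^+ 2 / m%:R)) =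
   M * cw n k + (M / m%:R) * (cw n k * (k%:R - m%:R) ^+ 2).
  move=> k; field; rewrite gt_eqF //.
rewrite (eq_bigr _ (fun k _ => e k)) big_split /= -!mulr_sumr cw_sum cw_var mulr1.
set q := (p + 1)^-1.
set y := n%:R * q.
have qp : q * (p + 1) = 1 by rewrite mulVf // gt_eqF.
have eV : n%:R * (n%:R - 1) / (p + 1) ^+ 2 + n%:R / (p + 1) - 2 * m%:R * n%:R / (p + 1)
   + m%:R ^+ 2 = y ^+ 2 - y * q + y - 2 * m%:R * y + m%:R ^+ 2.
  rewrite /y /q; field; rewrite gt_eqF //.
rewrite eV.
have q1 : q < 1 by rewrite /q invf_lt1 //; have := p0; lra.
have qpos : 0 < q by rewrite /q invr_gt0.
have y0 : 0 <= y by rewrite /y mulr_ge0 // ltW.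
have ym : y <= m%:R.
  have := ler_wpM2r (ltW qpos) tn1; rewrite -mulrA (mulrC (p + 1)) qp mulr1 //.
have my : m%:R < y + q.
  have := ltr_pM2r qpos; move=> /(_ (m%:R * (p + 1)) (n.+1%:R)); rewrite tn2.
  by rewrite -mulrA (mulrC (p + 1)) qp mulr1 -natr1 mulrDl mul1r /y => ->.
have V : y ^+ 2 - y * q + y - 2 * m%:R * y + m%:R ^+ 2 <= m%:R + 1 by nra.
have : M / m%:R * (y ^+ 2 - y * q + y - 2 * m%:R * y + m%:R ^+ 2) <= M / m%:R * (m%:R + 1).
  by apply: ler_wpM2l => //; apply: divr_ge0 => //; apply: ltW.
have : M / m%:R * (m%:R + 1) <= 2 * M.
  rewrite mulrDr divfK ?gt_eqF // mulr1.
  have : M / m%:R <= M by rewrite ler_pdivrMr // ler_peMr // ler1n.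
  lra.
lra.
Qed.
End B.

Arguments cw {R}.
Arguments S {R}.
Arguments taub {R p} p0 {x M K N0}.
Arguments cw_sum {R p}.

Section M.
Variable R : realType.

Lemma big_lo (I : Type) (r : seq I) (P : pred I) (F : I -> R -> R) (a : R) :
  0 < a <= 1 -> (forall i, FN (F i)) ->
  FN (\big[fadd/fzero]_(i <- r | P i) F i) /\
  lo (\big[fadd/fzero]_(i <- r | P i) F i) a = \sum_(i <- r | P i) lo (F i) a /\
  hi (\big[fadd/fzero]_(i <- r | P i) F i) a = \sum_(i <- r | P i) hi (F i) a.
Proof.
move=> a01 HF.
have [h1 h2] : FN (\big[fadd/fzero]_(i <- r | P i) F i) /\
  lo (\big[fadd/fzero]_(i <- r | P i) F i) a = \sum_(i <- r | P i) lo (F i) a.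
  apply: (big_ind2 (fun w s => FN w /\ lo w a = s)).
  - by split; [exact: FN_fzero | have [-> _] := fzero_lohi a01].
  - move=> y1 y2 z1 z2 [Fy <-] [Fz <-]; have [Fw Hw] := FN_fadd Fy Fz.
    by split => //; have [-> _] := Hw a a01.
  - by move=> i _; split.
have [_ h3] : FN (\big[fadd/fzero]_(i <- r | P i) F i) /\
  hi (\big[fadd/fzero]_(i <- r | P i) F i) a = \sum_(i <- r | P i) hi (F i) a.
  apply: (big_ind2 (fun w s => FN w /\ hi w a = s)).
  - by split; [exact: FN_fzero | have [_ ->] := fzero_lohi a01].
  - move=> y1 y2 z1 z2 [Fy <-] [Fz <-]; have [Fw Hw] := FN_fadd Fy Fz.
    by split => //; have [_ ->] := Hw a a01.
  - by move=> i _; split.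
by [].
Qed.

Lemma psum_lohi (u : nat -> R -> R) n a : 0 < a <= 1 -> (forall k, FN (u k)) ->
  FN (psum u n) /\ lo (psum u n) a = S (fun k => lo (u k) a) n /\
  hi (psum u n) a = S (fun k => hi (u k) a) n.
Proof. by move=> a01 Hu; rewrite /psum /S; apply: big_lo. Qed.

Lemma cw_gt0 (p : R) n (k : 'I_n.+1) : 0 < p -> 0 < cw p n k.
Proof.
move=> p0; rewrite /cw divr_gt0 ?exprn_gt0 ?mulr_gt0 ?exprn_gt0 ?ltr0n ?bin_gt0 //.
- by rewrite -ltnS.
- by rewrite addr_gt0.
Qed.

Lemma euler_lohi (p : R) (u : nat -> R -> R) n a : 0 < p -> 0 < a <= 1 ->
  (forall k, FN (u k)) ->
  FN (euler_mean p (psum u) n) /\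
  lo (euler_mean p (psum u) n) a = \sum_(k < n.+1) cw p n k * S (fun k => lo (u k) a) k /\
  hi (euler_mean p (psum u) n) a = \sum_(k < n.+1) cw p n k * S (fun k => hi (u k) a) k.
Proof.
move=> p0 a01 Hu; rewrite /euler_mean -/(cw p n _).
have HF : forall k : 'I_n.+1, FN (fscale (cw p n k) (psum u k)).
  by move=> k; have [] := FN_fscale (cw_gt0 p n k p0) (proj1 (psum_lohi u k a a01 Hu)).
have [F1 [F2 F3]] := big_lo _ (index_enum 'I_n.+1) xpredT _ a a01 HF.
split => //; split.
- rewrite F2; apply: eq_bigr => k _.
  have [_ H] := FN_fscale (cw_gt0 p n k p0) (proj1 (psum_lohi u k a a01 Hu)).
  by have [-> _] := H a a01; have [_ [-> _]] := psum_lohi u k a a01 Hu.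
- rewrite F3; apply: eq_bigr => k _.
  have [_ H] := FN_fscale (cw_gt0 p n k p0) (proj1 (psum_lohi u k a a01 Hu)).
  by have [_ ->] := H a a01; have [_ [_ ->]] := psum_lohi u k a a01 Hu.
Qed.

Lemma partial_le (d : nat -> R) m N : (forall k, 0 <= d k) -> (m <= N)%N ->
  \sum_(k < m.+1) d k <= \sum_(k < N.+1) d k.
Proof.
move=> d0; elim: N => [|N IH]; first by rewrite leqn0 => /eqP ->.
rewrite leq_eqVlt => /orP [/eqP ->|]; first by [].
rewrite ltnS => /IH h; rewrite [X in _ <= X]big_ord_recr /=; have := d0 N.+1; lra.
Qed.

Lemma term_le_sum (f : nat -> R) N k : (forall j, 0 <= f j) -> (k < N)%N ->
  f k <= \sum_(j < N) f j.
Proof.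
move=> f0 kN; rewrite (bigD1 (Ordinal kN)) //= lerDl.
by apply: sumr_ge0 => j _.
Qed.

Lemma main_aux (p : R) u nu : 0 < p -> (forall n, FN (u n)) -> FN nu ->
  Ep_summable_series p u nu ->
  (exists M : R, \forall n \near \oo,
      `|Num.sqrt (n%:R : R) * fdist (u n) fzero| <= M) ->
  in_bs u.
Proof.
move=> p0 Fu Fnu HE [M0 HM].
pose d := fun k => fdist (u k) fzero.
have dge : forall k a, 0 < a <= 1 -> `|lo (u k) a| <= d k /\ `|hi (u k) a| <= d k.
  move=> k a a01; have a01' : 0 <= a <= 1.
    by case/andP: a01 => a0 a1; rewrite a1 ltW.
  have [h1 h2] := fdist_ge (Fu k) FN_fzero a01'.
  by have [e1 e2] := fzero_lohi a01; rewrite e1 e2 !subr0 in h1 h2.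
have o1 : 0 < (1:R) <= 1 by rewrite ltr01 lexx.
have d0 : forall k, 0 <= d k.
  by move=> k; have [h _] := dge k 1 o1; exact: le_trans (normr_ge0 _) h.
case: HM => N1 _ HN1.
have M00 : 0 <= M0 by have := HN1 N1 (leqnn N1); apply: le_trans.
pose M := M0 + \sum_(j < N1) Num.sqrt (j%:R : R) * d j.
have sum0 : 0 <= \sum_(j < N1) Num.sqrt (j%:R : R) * d j.
  by apply: sumr_ge0 => j _; rewrite mulr_ge0 // sqrtr_ge0.
have M0' : 0 <= M by rewrite /M addr_ge0.
have hM : forall k a, 0 < a <= 1 -> (1 <= k)%N ->
   Num.sqrt (k%:R) * `|lo (u k) a| <= M /\ Num.sqrt (k%:R) * `|hi (u k) a| <= M.
  move=> k a a01 k1; have [h1 h2] := dge k a a01.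
  have sk : Num.sqrt (k%:R) * d k <= M.
    have [kN|Nk] := ltnP k N1.
    - have := @term_le_sum (fun j => Num.sqrt (j%:R : R) * d j) N1 k
        (fun j => mulr_ge0 (sqrtr_ge0 _) (d0 j)) kN.
      move=> /= h; rewrite /M; lra.
    - have := HN1 k Nk => /= h; have := ler_norm (Num.sqrt (k%:R : R) * d k).
      rewrite /M; lra.
  by split; apply: le_trans sk; apply: ler_wpM2l => //; rewrite sqrtr_ge0.
move: HE; rewrite /Ep_summable_series /Ep_summable_seq => /cvgrPdist_le /(_ 1 ltr01).
case=> N0 _ HN0.
have [Cnu HCnu] := FN_Bnd Fnu.
have Cnu0 : 0 <= Cnu.
  have z01 : 0 <= (0:R) <= 1 by rewrite lexx ler01.
  have [h _] := HCnu 0 z01; exact: le_trans (normr_ge0 _) h.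
pose K := 1 + Cnu.
have hT : forall a, 0 < a <= 1 -> forall n, (N0 <= n)%N ->
   `|\sum_(k < n.+1) cw p n k * S (fun k => lo (u k) a) k| <= K /\
   `|\sum_(k < n.+1) cw p n k * S (fun k => hi (u k) a) k| <= K.
  move=> a a01 n Nn; have [F1 [<- <-]] := euler_lohi p u n a p0 a01 Fu.
  have a01' : 0 <= a <= 1 by case/andP: a01 => a0 a1; rewrite a1 ltW.
  have [h1 h2] := fdist_ge F1 Fnu a01'.
  have hf := HN0 n Nn; rewrite /= sub0r normrN in hf.
  have hf' := le_trans (ler_norm _) hf.
  have [c1 c2] := HCnu a a01'.
  split.
  - have := ler_normD (lo (euler_mean p (psum u) n) a - lo nu a) (lo nu a).
    rewrite subrK /K; lra.
  - have := ler_normD (hi (euler_mean p (psum u) n) a - hi nu a) (hi nu a).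
    rewrite subrK /K; lra.
pose D0 := \sum_(k < N0.+1) d k.
have D00 : 0 <= D0 by apply: sumr_ge0 => k _.
pose C := K + 3 * M + D0.
have hS : forall a, 0 < a <= 1 -> forall m,
    `|lo (psum u m) a| <= C /\ `|hi (psum u m) a| <= C.
  move=> a a01 m; have [_ [-> ->]] := psum_lohi u m a a01 Fu.
  have [Nm|] := boolP ((N0 <= m)%N && (1 <= m)%N).
  - case/andP: Nm => Nm m1.
    have t1 := taub p0 M0' (fun k k1 => (hM k a a01 k1).1) (fun n Nn => (hT a a01 n Nn).1) m Nm m1.
    have t2 := taub p0 M0' (fun k k1 => (hM k a a01 k1).2) (fun n Nn => (hT a a01 n Nn).2) m Nm m1.
    rewrite /C; split; lra.
  - rewrite negb_and -!ltnNge ltnS leqn0 => hm.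
    have mN : (m <= N0)%N by case/orP: hm => [/ltnW //|/eqP ->].
    have pl := partial_le _ _ _ d0 mN.
    have K0 : 0 <= K by rewrite /K; lra.
    split; rewrite /S; apply: le_trans (ler_norm_sum _ _ _) _;
      apply: (@le_trans _ _ (\sum_(k < m.+1) d k)); rewrite ?/C ?/D0; try lra.
    + by apply: ler_sum => k _; have [] := dge k a a01.
    + by apply: ler_sum => k _; have [] := dge k a a01.
have C0 : 0 <= C by rewrite /C /K; lra.
exists (C + 1); first lra.
move=> n; have [Fs _] := psum_lohi u n 1 o1 Fu.
have Bs : Bnd (psum u n) C by apply: Bnd_of Fs _ => a a01; exact: hS.
have Bz : Bnd (@fzero R) 0.
  apply: Bnd_of FN_fzero _ => a a01; have [-> ->] := fzero_lohi a01; by rewrite normr0.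
have : fdist (psum u n) fzero <= C.
  apply: fdist_le => a a01; have [b1 b2] := Bs a a01; have [z1 z2] := Bz a a01.
  split; apply: le_trans (ler_normB _ _) _; lra.
lra.
Qed.
End M.

Theorem mainTheorem2 (R : realType) (p : R) (u : nat -> R -> R) (nu : R -> R) :
  0 < p ->
  (forall n, is_fuzzy_number (u n)) ->
  is_fuzzy_number nu ->
  Ep_summable_series p u nu ->
  (exists M : R, \forall n \near \oo,
      `|Num.sqrt (n%:R : R) * fdist (u n) fzero| <= M) ->
  in_bs u.
Proof.
move=> p0 Hu Hnu HE HM; apply: (@main_aux R p u nu p0 _ _ HE HM).
- by move=> n; exact: FN_of_fuzzy.
- exact: FN_of_fuzzy.
Qed.
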